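(* Let $\Psi$ be a declarative context and $A, B, C$ types with $\Psi \vdash A\ \mathsf{type}$, $\Psi \vdash B\ \mathsf{type}$ and $\Psi \vdash C\ \mathsf{type}$. If $\Psi \vdash A \le^{\pm} B$ and $\Psi \vdash B \le^{\pm} C$ (same polarity $\pm$), then $\Psi \vdash A \le^{\pm} C$.
   Context: Sorts are $\kappa \in \{\mathsf{type}, \mathbb{N}\}$. Index terms/monotypes $\tau, t$ are built from $\mathbf{1}$, universal variables $\alpha$, binary connectives $\tau_1 \oplus \tau_2$ with $\oplus \in \{\to, +, \times\}$ (sort $\mathsf{type}$), and $\mathsf{zero}$, $\mathsf{succ}(t)$ (sort $\mathbb{N}$); $\Psi \vdash t : \kappa$ means $t$ has sort $\kappa$ with its variables declared in $\Psi$. Types are $A, B, C ::= \mathbf{1} \mid \alpha \mid A \oplus B \mid \forall \alpha{:}\kappa.\,A \mid \exists \alpha{:}\kappa.\,A \mid P \supset A \mid A \wedge P \mid \mathsf{Vec}\ t\ A$ with propositions $P ::= t = t'$. A declarative context $\Psi$ is a list of declarations including universal variables $\alpha:\kappa$; $\Psi \vdash A\ \mathsf{type}$ means all free variables of $A$ are declared in $\Psi$ at appropriate sorts. A type is positive if headed by $\exists$, negative if headed by $\forall$; nonpos = not positive, nonneg = not negative. Declarative subtyping $\Psi \vdash A \le^{\pm} B$ is inductively defined by: (Refl) if $\Psi \vdash A\ \mathsf{type}$ and $A$ is nonpos and nonneg then $\Psi \vdash A \le^{\pm} A$; ($\forall$L) $\Psi \vdash \tau : \kappa$ and $\Psi \vdash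 [\tau/\alpha]A \le^- B$ give $\Psi \vdash \forall\alpha{:}\kappa.A \le^- B$; ($\forall$R) $\Psi, \beta{:}\kappa \vdash A \le^- B$ gives $\Psi \vdash A \le^- \forall\beta{:}\kappa.B$; ($\exists$L) $\Psi, \alpha{:}\kappa \vdash A \le^+ B$ gives $\Psi \vdash \exists\alpha{:}\kappa.A \le^+ B$; ($\exists$R) $\Psi \vdash \tau:\kappa$ and $\Psi \vdash A \le^+ [\tau/\beta]B$ give $\Psi \vdash A \le^+ \exists\beta{:}\kappa.B$; ($-{+}$) $\Psi \vdash A \le^- B$ with $A,B$ nonpos gives $\Psi \vdash A \le^+ B$; ($+{-}$) $\Psi \vdash A \le^+ B$ with $A,B$ nonneg gives $\Psi \vdash A \le^- B$. *)

(* Defs.v *)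
(* Locally nameless syntax for the declarative system of
   Dunfield & Krishnaswami style subtyping with indexed types. *)
From Stdlib Require Import List Arith.
Import ListNotations.

Inductive sort : Type := SType | SNat.

Inductive binop : Type := OArrow | OSum | OProd.

(* Types and index terms/monotypes share one syntax (as in the paper:
   monotypes tau, t are built from 1, alpha, tau1 (+) tau2, zero, succ t). *)
Inductive ty : Type :=
  | TUnit : ty
  | TFVar : nat -> ty
  | TBVar : nat -> ty
  | TBin  : binop -> ty -> ty -> ty
  | TAll  : sort -> ty -> ty
  | TEx   : sort -> ty -> ty
  | TImp  : prop -> ty -> ty
  | TWith : ty -> prop -> ty
  | TVec  : ty -> ty -> ty
  | TZero : ty
  | TSucc : ty -> ty
with prop : Type :=
  | PEq : ty -> ty -> prop.

(* opening: replace bound index k by u  (this realizes [u/alpha]A) *)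
Fixpoint open_ty (k : nat) (u : ty) (A : ty) {struct A} : ty :=
  match A with
  | TUnit => TUnit
  | TFVar a => TFVar a
  | TBVar i => if Nat.eqb i k then u else TBVar i
  | TBin o A1 A2 => TBin o (open_ty k u A1) (open_ty k u A2)
  | TAll s A1 => TAll s (open_ty (S k) u A1)
  | TEx s A1 => TEx s (open_ty (S k) u A1)
  | TImp P A1 => TImp (open_prop k u P) (open_ty k u A1)
  | TWith A1 P => TWith (open_ty k u A1) (open_prop k u P)
  | TVec t A1 => TVec (open_ty k u t) (open_ty k u A1)
  | TZero => TZero
  | TSucc t => TSucc (open_ty k u t)
  end
with open_prop (k : nat) (u : ty) (P : prop) {struct P} : prop :=
  match P with
  | PEq t1 t2 => PEq (open_ty k u t1) (open_ty k u t2)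
  end.

Definition open (A : ty) (u : ty) : ty := open_ty 0 u A.

(* Declarative contexts: the most recent declaration is at the head. *)
Inductive decl : Type :=
  | DUvar : nat -> sort -> decl
  | DVar  : nat -> ty -> decl.

Definition ctx := list decl.

Definition in_dom (a : nat) (G : ctx) : Prop :=
  exists k, In (DUvar a k) G.

Inductive sorting (G : ctx) : ty -> sort -> Prop :=
  | S_Unit : sorting G TUnit SType
  | S_Var : forall a k, In (DUvar a k) G -> sorting G (TFVar a) k
  | S_Bin : forall o t1 t2,
      sorting G t1 SType -> sorting G t2 SType -> sorting G (TBin o t1 t2) SType
  | S_Zero : sorting G TZero SNat
  | S_Succ : forall t, sorting G t SNat -> sorting G (TSucc t) SNat.

Definition wf_prop (G : ctx) (P : prop) : Prop :=
  match P with
  | PEq t1 t2 => sorting G t1 SNat /\ sorting G t2 SNat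
  end.

Inductive wf_ty (G : ctx) : ty -> Prop :=
  | W_Unit : wf_ty G TUnit
  | W_Var : forall a, In (DUvar a SType) G -> wf_ty G (TFVar a)
  | W_Bin : forall o A B, wf_ty G A -> wf_ty G B -> wf_ty G (TBin o A B)
  | W_All : forall k A (L : list nat),
      (forall a, ~ In a L -> wf_ty (DUvar a k :: G) (open A (TFVar a))) ->
      wf_ty G (TAll k A)
  | W_Ex : forall k A (L : list nat),
      (forall a, ~ In a L -> wf_ty (DUvar a k :: G) (open A (TFVar a))) ->
      wf_ty G (TEx k A)
  | W_Imp : forall P A, wf_prop G P -> wf_ty G A -> wf_ty G (TImp P A)
  | W_With : forall A P, wf_ty G A -> wf_prop G P -> wf_ty G (TWith A P)
  | W_Vec : forall t A, sorting G t SNat -> wf_ty G A -> wf_ty G (TVec t A).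

Definition positive (A : ty) : bool :=
  match A with TEx _ _ => true | _ => false end.
Definition negative (A : ty) : bool :=
  match A with TAll _ _ => true | _ => false end.
Definition nonpos (A : ty) : Prop := positive A = false.
Definition nonneg (A : ty) : Prop := negative A = false.

Inductive polarity : Type := Plus | Minus.

Inductive sub (G : ctx) : polarity -> ty -> ty -> Prop :=
  | Sub_Refl : forall p A,
      wf_ty G A -> nonpos A -> nonneg A -> sub G p A A
  | Sub_AllL : forall k A B tau,
      sorting G tau k -> sub G Minus (open A tau) B ->
      sub G Minus (TAll k A) B
  | Sub_AllR : forall k A B (L : list nat),
      (forall b, ~ In b L -> sub (DUvar b k :: G) Minus A (open B (TFVar b))) ->
      sub G Minus A (TAll k B)
  | Sub_ExL : forall k A B (L : list nat),
      (forall a, ~ In a L -> sub (DUvar a k :: G) Plus (open A (TFVar a)) B) ->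
      sub G Plus (TEx k A) B
  | Sub_ExR : forall k A B tau,
      sorting G tau k -> sub G Plus A (open B tau) ->
      sub G Plus A (TEx k B)
  | Sub_MinusPlus : forall A B,
      sub G Minus A B -> nonpos A -> nonpos B -> sub G Plus A B
  | Sub_PlusMinus : forall A B,
      sub G Plus A B -> nonneg A -> nonneg B -> sub G Minus A B.

(* Main.v *)
Require Import Defs.
From Stdlib Require Import List Arith Lia.
Import ListNotations.

Scheme ty_mut := Induction for ty Sort Prop
  with prop_mut := Induction for prop Sort Prop.
Combined Scheme ty_prop_mut from ty_mut, prop_mut.

Fixpoint subst (b : nat) (u : ty) (A : ty) {struct A} : ty :=
  match A with
  | TUnit => TUnit
  | TFVar a => if Nat.eqb a b then u else TFVar a
  | TBVar i => TBVar i
  | TBin o A1 A2 => TBin o (subst b u A1) (subst b u A2)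
  | TAll s A1 => TAll s (subst b u A1)
  | TEx s A1 => TEx s (subst b u A1)
  | TImp P A1 => TImp (subst_prop b u P) (subst b u A1)
  | TWith A1 P => TWith (subst b u A1) (subst_prop b u P)
  | TVec t A1 => TVec (subst b u t) (subst b u A1)
  | TZero => TZero
  | TSucc t => TSucc (subst b u t)
  end
with subst_prop (b : nat) (u : ty) (P : prop) {struct P} : prop :=
  match P with
  | PEq t1 t2 => PEq (subst b u t1) (subst b u t2)
  end.

Fixpoint fv (A : ty) : list nat :=
  match A with
  | TUnit => []
  | TFVar a => [a]
  | TBVar i => []
  | TBin o A1 A2 => fv A1 ++ fv A2
  | TAll s A1 => fv A1
  | TEx s A1 => fv A1
  | TImp P A1 => fv_prop P ++ fv A1
  | TWith A1 P => fv A1 ++ fv_prop P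
  | TVec t A1 => fv t ++ fv A1
  | TZero => []
  | TSucc t => fv t
  end
with fv_prop (P : prop) : list nat :=
  match P with PEq t1 t2 => fv t1 ++ fv t2 end.

Fixpoint qc (A : ty) : nat :=
  match A with
  | TBin o A1 A2 => qc A1 + qc A2
  | TAll s A1 => S (qc A1)
  | TEx s A1 => S (qc A1)
  | TImp P A1 => qc A1
  | TWith A1 P => qc A1
  | TVec t A1 => qc t + qc A1
  | TSucc t => qc t
  | _ => 0
  end.

Fixpoint dom (G : ctx) : list nat :=
  match G with
  | [] => []
  | DUvar a _ :: G' => a :: dom G'
  | DVar _ _ :: G' => dom G'
  end.

Lemma in_dom_l : forall G a s, In (DUvar a s) G -> In a (dom G).
Proof.
  induction G as [|d G IH]; simpl; intros a s H; [contradiction|].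
  destruct H as [H|H].
  - subst; simpl; auto.
  - destruct d; simpl; eauto.
Qed.

Lemma fresh : forall l : list nat, exists x, ~ In x l.
Proof.
  intro l. assert (H : forall y, In y l -> y <= fold_right plus 0 l).
  { induction l; simpl; intros y Hy; [contradiction|].
    destruct Hy; [subst; lia|]. specialize (IHl y H). lia. }
  exists (S (fold_right plus 0 l)). intro Hin. specialize (H _ Hin). lia.
Qed.

Definition uincl (G G' : ctx) := forall a s, In (DUvar a s) G -> In (DUvar a s) G'.

Lemma uincl_cons : forall G G' d, uincl G G' -> uincl (d :: G) (d :: G').
Proof. unfold uincl; simpl; intros; intuition. Qed.

Lemma sorting_mono : forall G t s, sorting G t s -> forall G', uincl G G' -> sorting G' t s.
Proof. induction 1; intros; constructor; auto. Qed.

Lemma wf_mono : forall G A, wf_ty G A -> forall G', uincl G G' -> wf_ty G' A.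
Proof.
  induction 1; intros G' Hi.
  - constructor.
  - constructor; auto.
  - constructor; auto.
  - apply W_All with L; intros; apply H0; auto using uincl_cons.
  - apply W_Ex with L; intros; apply H0; auto using uincl_cons.
  - constructor; auto. destruct P; simpl in *; intuition; eapply sorting_mono; eauto.
  - constructor; auto. destruct P; simpl in *; intuition; eapply sorting_mono; eauto.
  - constructor; auto. eapply sorting_mono; eauto.
Qed.

Lemma sub_mono : forall G p A B, sub G p A B -> forall G', uincl G G' -> sub G' p A B.
Proof.
  induction 1; intros G' Hi.
  - apply Sub_Refl; auto. eapply wf_mono; eauto.
  - eapply Sub_AllL; eauto using sorting_mono.
  - apply Sub_AllR with L; intros; apply H0; auto using uincl_cons.
  - apply Sub_ExL with L; intros; apply H0; auto using uincl_cons.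
  - eapply Sub_ExR; eauto using sorting_mono.
  - apply Sub_MinusPlus; auto.
  - apply Sub_PlusMinus; auto.
Qed.

Lemma sorting_lc : forall G t s, sorting G t s -> forall k v, open_ty k v t = t.
Proof. induction 1; intros; simpl; try rewrite IHsorting; try rewrite IHsorting1, IHsorting2; auto. Qed.

Lemma sorting_qc : forall G t s, sorting G t s -> qc t = 0.
Proof. induction 1; simpl; lia. Qed.

Lemma sorting_wf : forall G t s, sorting G t s -> s = SType -> wf_ty G t.
Proof. induction 1; intros; subst; try discriminate; constructor; auto. Qed.

Lemma qc_open : forall A k u, qc u = 0 -> qc (open_ty k u A) = qc A.
Proof.
  induction A; intros; simpl; auto.
  destruct (Nat.eqb n k); simpl; auto.
Qed.

Section SubstLemmas.
Variable b : nat.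
Variable tau : ty.
Hypothesis Hlc : forall k v, open_ty k v tau = tau.

Lemma subst_open_both :
  (forall A k u, subst b tau (open_ty k u A) = open_ty k (subst b tau u) (subst b tau A)) /\
  (forall P k u, subst_prop b tau (open_prop k u P) = open_prop k (subst b tau u) (subst_prop b tau P)).
Proof.
  apply ty_prop_mut;
  intros; simpl; try congruence;
  repeat match goal with
  | |- context [Nat.eqb ?x ?y] => let E := fresh in destruct (Nat.eqb x y) eqn:E; simpl; try rewrite E
  end; auto.
Qed.

Lemma subst_open : forall A k u, subst b tau (open_ty k u A) = open_ty k (subst b tau u) (subst b tau A).
Proof. apply subst_open_both. Qed.

Lemma subst_fresh_both :
  (forall A, ~ In b (fv A) -> subst b tau A = A) /\
  (forall P, ~ In b (fv_prop P) -> subst_prop b tau P = P).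
Proof.
  apply ty_prop_mut;
  intros; simpl in *; rewrite ?in_app_iff in *; try (f_equal; intuition).
  destruct (Nat.eqb n b) eqn:E; auto. apply Nat.eqb_eq in E. subst. intuition.
Qed.

Lemma subst_intro : forall A, ~ In b (fv A) -> subst b tau (open A (TFVar b)) = open A tau.
Proof.
  intros. unfold open. rewrite subst_open. simpl. rewrite Nat.eqb_refl.
  rewrite (proj1 subst_fresh_both); auto.
Qed.

Lemma subst_open_var : forall A a, a <> b -> subst b tau (open A (TFVar a)) = open (subst b tau A) (TFVar a).
Proof.
  intros. unfold open. rewrite subst_open. simpl.
  destruct (Nat.eqb a b) eqn:E; auto. apply Nat.eqb_eq in E. contradiction.
Qed.

End SubstLemmas.

Definition ctx_rel b k G1 G2 :=
  forall a s, In (DUvar a s) G1 -> (a = b /\ s = k) \/ (a <> b /\ In (DUvar a s) G2).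

Lemma ctx_rel_cons : forall b k G1 G2 a s, a <> b -> ctx_rel b k G1 G2 ->
  ctx_rel b k (DUvar a s :: G1) (DUvar a s :: G2).
Proof.
  unfold ctx_rel; simpl; intros. destruct H1 as [H1|H1].
  - inversion H1; subst. right; auto.
  - destruct (H0 _ _ H1) as [?|[? ?]]; auto.
Qed.

Lemma uincl_tl : forall G d, uincl G (d :: G).
Proof. unfold uincl; simpl; auto. Qed.

Lemma sorting_subst : forall G1 t s, sorting G1 t s -> forall b k tau G2,
  ctx_rel b k G1 G2 -> sorting G2 tau k -> sorting G2 (subst b tau t) s.
Proof.
  induction 1; intros; simpl; try (constructor; eauto).
  destruct (H0 _ _ H) as [[? ?]|[? ?]].
  - subst. rewrite Nat.eqb_refl. auto.
  - destruct (Nat.eqb a b) eqn:E; [apply Nat.eqb_eq in E; contradiction|]. constructor; auto.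
Qed.

Lemma wf_subst : forall G1 A, wf_ty G1 A -> forall b k tau G2,
  ctx_rel b k G1 G2 -> sorting G2 tau k -> wf_ty G2 (subst b tau A).
Proof.
  induction 1; intros b0 k0 tau0 G2 Hr Ht; simpl.
  - constructor.
  - destruct (Hr _ _ H) as [[? ?]|[? ?]].
    + subst. rewrite Nat.eqb_refl. eapply sorting_wf; eauto.
    + destruct (Nat.eqb a b0) eqn:E; [apply Nat.eqb_eq in E; contradiction|]. constructor; auto.
  - constructor; eauto.
  - apply W_All with (b0 :: L). intros a Ha. simpl in Ha.
    rewrite <- subst_open_var by (eauto using sorting_lc; intuition).
    apply H0 with (k := k0); [intuition|apply ctx_rel_cons; intuition|].
    eapply sorting_mono; eauto using uincl_tl.
  - apply W_Ex with (b0 :: L). intros a Ha. simpl in Ha.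
    rewrite <- subst_open_var by (eauto using sorting_lc; intuition).
    apply H0 with (k := k0); [intuition|apply ctx_rel_cons; intuition|].
    eapply sorting_mono; eauto using uincl_tl.
  - constructor; eauto. destruct P; simpl in *; intuition; eapply sorting_subst; eauto.
  - constructor; eauto. destruct P; simpl in *; intuition; eapply sorting_subst; eauto.
  - constructor; eauto. eapply sorting_subst; eauto.
Qed.

Lemma nonpos_subst : forall G b k tau A, sorting G tau k -> nonpos A -> nonpos (subst b tau A).
Proof.
  unfold nonpos; intros. destruct A; simpl in *; auto.
  destruct (Nat.eqb n b); auto. inversion H; auto.
Qed.

Lemma nonneg_subst : forall G b k tau A, sorting G tau k -> nonneg A -> nonneg (subst b tau A).
Proof.
  unfold nonneg; intros. destruct A; simpl in *; auto.
  destruct (Nat.eqb n b); auto. inversion H; auto.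
Qed.

Lemma sub_subst : forall G1 p A B, sub G1 p A B -> forall b k tau G2,
  ctx_rel b k G1 G2 -> sorting G2 tau k -> sub G2 p (subst b tau A) (subst b tau B).
Proof.
  induction 1; intros b0 k0 tau0 G2 Hr Ht; simpl.
  - apply Sub_Refl; eauto using wf_subst, nonpos_subst, nonneg_subst.
  - apply Sub_AllL with (subst b0 tau0 tau); [eapply sorting_subst; eauto|].
    unfold open. rewrite <- subst_open by eauto using sorting_lc. eauto.
  - apply Sub_AllR with (b0 :: L). intros a Ha. simpl in Ha.
    rewrite <- subst_open_var by (eauto using sorting_lc; intuition).
    apply H0 with (k := k0); [intuition|apply ctx_rel_cons; intuition|].
    eapply sorting_mono; eauto using uincl_tl.
  - apply Sub_ExL with (b0 :: L). intros a Ha. simpl in Ha.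
    rewrite <- subst_open_var by (eauto using sorting_lc; intuition).
    apply H0 with (k := k0); [intuition|apply ctx_rel_cons; intuition|].
    eapply sorting_mono; eauto using uincl_tl.
  - apply Sub_ExR with (subst b0 tau0 tau); [eapply sorting_subst; eauto|].
    unfold open. rewrite <- subst_open by eauto using sorting_lc. eauto.
  - apply Sub_MinusPlus; eauto using nonpos_subst.
  - apply Sub_PlusMinus; eauto using nonneg_subst.
Qed.

Lemma sub_subst1 : forall G p k tau b X Y, sub (DUvar b k :: G) p X Y -> sorting G tau k ->
  ~ In b (dom G) -> sub G p (subst b tau X) (subst b tau Y).
Proof.
  intros. eapply sub_subst; eauto.
  intros a s Ha. simpl in Ha. destruct Ha as [Ha|Ha].
  - inversion Ha; auto.
  - right; split; auto. intro; subst. apply H1. eapply in_dom_l; eauto.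
Qed.

Ltac pol := try (unfold nonneg, nonpos in *; simpl in *; discriminate).

Lemma trans_n : forall n B, qc B < n -> forall G p A C, sub G p A B -> sub G p B C -> sub G p A C.
Proof.
  induction n as [|n IHn]; [intros; lia|].
  intros B HB G p A C D1 D2.
  enough (H: forall G p B C, sub G p B C -> qc B < S n -> forall G', uincl G G' ->
            forall A, sub G' p A B -> sub G' p A C)
    by (eapply H; eauto; unfold uincl; auto).
  clear B HB G p A C D1 D2.
  intros G0 p0 B0 C0 D2.
  induction D2 as [Gx p M HM HMp HMn | Gx k M C tau Hs D2 IH2 | Gx k M C L H2 IH2 | Gx k M C L H2 IH2
                  | Gx k M C tau Hs D2 IH2 | Gx M C D2 Hp1 Hp2 IH2 | Gx M C D2 Hn1 Hn2 IH2];
    intros Hq G' Hi A0 D1.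
  - exact D1.
  -
    remember (TAll k M) as B1 eqn:EB. remember Minus as q eqn:Eq.
    induction D1 as [Gy q X HX HXp HXn | Gy k1 X Y tau1 Hs1 D1 IH1 | Gy k1 X Y L1 H1 IH1 | Gy k1 X Y L1 H1 IH1
                  | Gy k1 X Y tau1 Hs1 D1 IH1 | Gy X Y D1 Hp3 Hp4 IH1 | Gy X Y D1 Hn3 Hn4 IH1];
      subst; try discriminate; pol.
    + eapply Sub_AllL; eauto.
    + injection EB as Ek EM; subst k1 Y.
      destruct (fresh (L1 ++ fv X ++ fv M ++ dom Gy)) as [b Hb].
      rewrite !in_app_iff in Hb.
      assert (Hs' : sorting Gy tau k) by (eapply sorting_mono; eauto).
      pose proof (sub_subst1 _ _ _ _ _ _ _ (H1 b ltac:(tauto)) Hs' ltac:(tauto)) as Hsub.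
      rewrite (proj1 (subst_fresh_both b tau)) in Hsub by tauto.
      rewrite subst_intro in Hsub by (eauto using sorting_lc; tauto).
      eapply (IHn (open M tau)); [|exact Hsub|eapply sub_mono; eauto].
      unfold open; rewrite qc_open by eauto using sorting_qc. simpl in Hq. lia.
  -
    apply Sub_AllR with L. intros b Hb.
    apply (IH2 b Hb Hq (DUvar b k :: G')); [apply uincl_cons; auto|].
    eapply sub_mono; eauto using uincl_tl.
  -
    remember (TEx k M) as B1 eqn:EB. remember Plus as q eqn:Eq.
    revert Hi.
    induction D1 as [Gy q X HX HXp HXn | Gy k1 X Y tau1 Hs1 D1 IH1 | Gy k1 X Y L1 H1 IH1 | Gy k1 X Y L1 H1 IH1
                  | Gy k1 X Y tau1 Hs1 D1 IH1 | Gy X Y D1 Hp3 Hp4 IH1 | Gy X Y D1 Hn3 Hn4 IH1];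
      intro Hi; subst; try discriminate; pol.
    + apply Sub_ExL with L1. intros a Ha. apply IH1; auto.
      intros x s Hx; simpl; auto.
    + injection EB as Ek EM; subst k1 Y.
      destruct (fresh (L ++ fv M ++ fv C ++ dom Gy)) as [b' Hb'].
      rewrite !in_app_iff in Hb'.
      assert (Hsub0 : sub (DUvar b' k :: Gy) Plus (open M (TFVar b')) C).
      { eapply sub_mono; [apply H2; tauto|]. apply uincl_cons; auto. }
      pose proof (sub_subst1 _ _ _ _ _ _ _ Hsub0 Hs1 ltac:(tauto)) as Hsub.
      rewrite (proj1 (subst_fresh_both b' tau1) C) in Hsub by tauto.
      rewrite subst_intro in Hsub by (eauto using sorting_lc; tauto).
      eapply (IHn (open M tau1)); [|exact D1|exact Hsub].
      unfold open; rewrite qc_open by eauto using sorting_qc. simpl in Hq. lia.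
  -
    apply Sub_ExR with tau; [eapply sorting_mono; eauto|]. eauto.
  -
    remember M as B1 eqn:EB. remember Plus as q eqn:Eq.
    revert Hi.
    induction D1 as [Gy q X HX HXp HXn | Gy k1 X Y tau1 Hs1 D1 IH1 | Gy k1 X Y L1 H1 IH1 | Gy k1 X Y L1 H1 IH1
                  | Gy k1 X Y tau1 Hs1 D1 IH1 | Gy X Y D1 Hp3 Hp4 IH1 | Gy X Y D1 Hn3 Hn4 IH1];
      intro Hi; subst; try discriminate; pol.
    + eapply sub_mono; [apply Sub_MinusPlus; eauto|auto].
    + apply Sub_ExL with L1. intros a Ha. apply IH1; auto.
      intros x s Hx; simpl; auto.
    + apply Sub_MinusPlus; eauto.
  -
    remember M as B1 eqn:EB. remember Minus as q eqn:Eq.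
    revert Hi.
    induction D1 as [Gy q X HX HXp HXn | Gy k1 X Y tau1 Hs1 D1 IH1 | Gy k1 X Y L1 H1 IH1 | Gy k1 X Y L1 H1 IH1
                  | Gy k1 X Y tau1 Hs1 D1 IH1 | Gy X Y D1 Hp3 Hp4 IH1 | Gy X Y D1 Hn3 Hn4 IH1];
      intro Hi; subst; try discriminate; pol.
    + eapply sub_mono; [apply Sub_PlusMinus; eauto|auto].
    + eapply Sub_AllL; eauto.
    + apply Sub_PlusMinus; eauto.
Qed.

Theorem mainTheorem4 :
  forall (G : ctx) (p : polarity) (A B C : ty),
    wf_ty G A -> wf_ty G B -> wf_ty G C ->
    sub G p A B -> sub G p B C -> sub G p A C.
Proof.
  intros. apply (trans_n (S (qc B)) B (Nat.lt_succ_diag_r _) G p A C); auto.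
Qed.
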